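(* Let $p$ be an odd prime and $l_1,l_2\ge0$ integers, and put $d=l_1+l_2-\tfrac12$. There exists an integer $s_0\ge0$ such that for every integer $s\ge s_0$ and every integer $a$ with $\frac{p^s-1}2-l_1\ge l_2+a\ge0$, $$\left|\binom{-\frac12-l_1}{l_2+a}-\binom{\frac{p^s-1}2-l_1}{l_2+a}\right|_p\le p^{-(s-d-a)}.$$
   Context: $|\cdot|_p$ is the $p$-adic norm on $\mathbb Q_p$. For $y\in\mathbb Q_p$ and an integer $k\ge0$, $\binom{y}{k}=\frac{y(y-1)\cdots(y-k+1)}{k!}$; the numbers $\binom{-1/2-l_1}{k}$ lie in $\mathbb Z_p$. *)

(* Defs.v *)
From HB Require Import structures.
From mathcomp Require Import all_boot all_order all_algebra.
From mathcomp Require Import all_classical all_reals all_analysis.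
Set Implicit Arguments. Unset Strict Implicit. Unset Printing Implicit Defensive.
Import Order.TTheory GRing.Theory Num.Theory.
Local Open Scope ring_scope.

Definition binq (y : rat) (k : nat) : rat :=
  (\prod_(i < k) (y - i%:R)) / (k`!)%:R.

Definition padic_val (p : nat) (q : rat) : int :=
  (logn p `|numq q|%N)%:Z - (logn p `|denq q|%N)%:Z.

Definition padic_norm (R : realType) (p : nat) (q : rat) : R :=
  if q == 0 then 0 else (p%:R : R) ^ (- padic_val p q).

(* Main.v *)
Require Import Defs.
From HB Require Import structures.
From mathcomp Require Import all_boot all_order all_algebra.
From mathcomp Require Import all_classical all_reals all_analysis.
From mathcomp Require Import zify ring lra.
Import Order.TTheory GRing.Theory Num.Theory.

Lemma tele p k n : 0 < p -> (p-1) * \sum_(1 <= i < n.+1) k %/ p^i + k %/ p^n <= k.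
Proof.
move=> p0; elim: n => [|n IH]; first by rewrite big_geq // expn0 divn1 muln0.
rewrite big_nat_recr //= expnSr divnMA.
have := leq_divM (k %/ p ^ n) p.
set A := \sum_(_ <= _ < _) _ in IH *. set x := k %/ p^n in IH *. set y := x %/ p.
nia.
Qed.

Lemma logn_fact_lt p k : prime p -> 2 < p -> 0 < k -> logn p k`! <= k.-1.
Proof.
move=> pp p2 k0; rewrite logn_fact //.
have := @tele p k k (prime_gt0 pp).
set S := \sum_(_ <= _ < _) _. move=> H. have H2 : 2 * S <= (p-1) * S by apply: leq_mul => //; lia. move: H H2; generalize (k %/ p ^ k); clearbody S; lia.
Qed.
Local Open Scope ring_scope.
Lemma pval_div p (n : int) (d : nat) : n != 0 -> (0 < d)%N ->
  padic_val p (n%:~R / d%:R) = (logn p `|n|%N)%:Z - (logn p d)%:Z.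
Proof.
move=> n0 d0; rewrite /padic_val.
set q : rat := n%:~R / d%:R.
have q0 : q != 0 by rewrite mulf_neq0 ?invr_eq0 ?intr_eq0 ?pnatr_eq0 -?lt0n.
have E : numq q * d%:Z = n * denq q.
  apply: (@intr_inj rat); rewrite !rmorphM /= numqE /q.
  have -> : ((d%:Z)%:~R : rat) = d%:R by []. rewrite mulrAC divfK // pnatr_eq0 -lt0n.
  exact: d0.
have E2 : (`|numq q| * d = `|n| * `|denq q|)%N.
  by rewrite -[d]/(`|d%:Z|%N) -!abszM E.
have H := congr1 (logn p) E2.
rewrite !lognM ?absz_gt0 ?numq_eq0 ?denq_eq0 // in H.
lia.
Qed.
Lemma binq_int (y : rat) (f : nat -> int) k :
  (forall i : nat, y - i%:R = (f i)%:~R / 2) ->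
  binq y k = (\prod_(i < k) f i)%:~R / ((2 ^ k * k`!)%N)%:R.
Proof.
move=> hf; rewrite /binq (eq_bigr (fun i : 'I_k => (f i)%:~R * 2^-1)); last by move=> i _; rewrite hf.
rewrite big_split /= prodr_const card_ord rmorph_prod /= natrM natrX.
by rewrite invfM exprVn mulrA.
Qed.

Lemma prod_shift (P : int) (f : nat -> int) k :
  exists m, \prod_(i < k) (P + f i) = \prod_(i < k) f i + P * m.
Proof.
elim: k => [|k [m IH]]; first by exists 0; rewrite !big_ord0 mulr0 addr0.
exists (m * (P + f k) + \prod_(i < k) f i).
rewrite !big_ord_recr /= IH; ring.
Qed.
Theorem lemma10p3 (R : realType) (p l1 l2 : nat) :
  prime p -> odd p ->
  exists s0 : nat, forall (s : nat) (a : int),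
    (s0 <= s)%N ->
    0 <= l2%:Z + a ->
    ((l2%:Z + a)%:~R : rat) <= (((p ^ s)%N)%:R - 1) / 2 - l1%:R ->
    let k := absz (l2%:Z + a) in
    let d : R := l1%:R + l2%:R - 1 / 2 in
    padic_norm R p (binq (- (1 / 2) - l1%:R) k
                    - binq ((((p ^ s)%N)%:R - 1) / 2 - l1%:R) k)
      <= (p%:R : R) `^ (- (s%:R - d - a%:~R)).
Proof.
move=> pp podd; exists 0%N => s a _ ha _; cbv zeta.
set k := absz (l2%:Z + a).
have hk : k%:Z = l2%:Z + a by rewrite /k gez0_abs.
set P := (p ^ s)%N.
pose c i : int := - ((2 * l1 + 2 * i + 1)%N)%:Z.
set D := (2 ^ k * k`!)%N.
have B1 : binq (- (1 / 2) - l1%:R) k = (\prod_(i < k) c i)%:~R / D%:R.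
  apply: binq_int => i; rewrite /c rmorphN /= -[((_ + _)%N)%:Z%:~R]/(((_ + _)%N)%:R : rat).
  rewrite !natrD; by field.
have B2 : binq ((P%:R - 1) / 2 - l1%:R) k = (\prod_(i < k) (P%:Z + c i))%:~R / D%:R.
  apply: (@binq_int _ (fun j => P%:Z + c j)) => i.
  rewrite /c rmorphD rmorphN /= -[((_ + _)%N)%:Z%:~R]/(((_ + _)%N)%:R : rat).
  rewrite -[(P%:Z)%:~R]/(P%:R : rat) !natrD; by field.
have [m Hm] := prod_shift P%:Z c k.
rewrite B1 B2 Hm.
have -> : ((\prod_(i < k) c i)%:~R / D%:R - (\prod_(i < k) c i + P%:Z * m)%:~R / D%:R : rat)
   = ((- (P%:Z * m))%:~R : rat) / D%:R.
  by rewrite -mulrBl rmorphN rmorphD /=; congr (_ * _); ring.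
have P0 : (0 < P)%N by rewrite expn_gt0 prime_gt0.
case: (eqVneq m 0) => [->|m0].
  by rewrite mulr0 oppr0 rmorph0 mul0r /padic_norm eqxx; exact: powR_ge0.
have k0 : (0 < k)%N.
  rewrite lt0n; apply/negP => /eqP k0.
  have : P%:Z * m = 0 by move: Hm; rewrite k0 !big_ord0 => /eqP; rewrite -subr_eq0 opprD addrA subrr add0r oppr_eq0 => /eqP.
  move/eqP; rewrite mulf_eq0 (negbTE m0) orbF.
  move/eqP; lia.
have nz : - (P%:Z * m) != 0 by rewrite oppr_eq0 mulf_neq0 // -lt0n.
have D0 : (0 < D)%N by rewrite muln_gt0 expn_gt0 fact_gt0.
rewrite /padic_norm ifF; last first.
  by apply/negbTE; rewrite mulf_neq0 ?invr_eq0 ?intr_eq0 ?pnatr_eq0 -?lt0n.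
rewrite pval_div // abszN abszM absz_nat lognM ?absz_gt0 //.
rewrite /D lognM ?expn_gt0 ?fact_gt0 // lognX (pfactorK s pp) (@logn_prime p 2 isT).
have p2 : (2 < p)%N.
  have : p != 2%N by apply/eqP=> E; move: podd; rewrite E.
  have := prime_gt1 pp. lia.
have Lf := @logn_fact_lt p k pp p2 k0.
have Ep : (p == 2)%N = false by apply/eqP => E; move: p2; rewrite E.
case: eqP => [E|_]; first by move: p2; rewrite E.
rewrite muln0 add0n.
rewrite -powR_intmul ?ler0n //; apply: ler_powR; first by rewrite ler1n prime_gt0.
have ha2 : a = k%:Z - l2%:Z by rewrite hk; ring.
rewrite ha2.
set L := logn p `|m|. set F := logn p k`!.
have H1 : ((s%:Z - k%:Z + 1) <= (s + L)%:Z - F%:Z)%R.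
  have : (F <= k.-1)%N := Lf. lia.
have H1R : ((s%:Z - k%:Z + 1)%:~R <= ((s + L)%:Z - F%:Z)%:~R :> R) by rewrite ler_int.
move: H1R; rewrite !rmorphD !rmorphN /= !rmorphB /=.
have := ler0n R l1.
rewrite ?PoszD ?rmorphD /= !pmulrn. lra.
Qed.
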